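(* Let $a_x,b_x$ be linearly independent linear forms. (B) For a quadratic form $f$: $J^2[f,a_xb_x,u_x^2]=0$ (identically in $u$) iff $f=a_0a_x^2+b_0b_x^2$ for some $a_0,b_0\in\mathbb C$. (C) For a cubic form $f$: $J^2[f,a_xb_x,u_x^2]=0$ (identically in $x$ and $u$) iff $f=a_0a_x^3+b_0b_x^3$ for some $a_0,b_0\in\mathbb C$.
   Context: Forms are homogeneous polynomials with complex coefficients in $x=(x_1,x_2,x_3)$. For $a\in\mathbb C^3$, $a_x=\sum a_ix_i$. The variables $u=(u_1,u_2,u_3)$ are indeterminates with $u_x=\sum u_ix_i$. The second transvectant is $J^2[f,g,h]=\big(\Omega^2(f(x)g(y)h(z))\big)|_{y=z=x}$, where $\Omega$ is the determinant of the operator matrix with rows $(\partial/\partial x_i)$, $(\partial/\partial y_i)$, $(\partial/\partial z_i)$, and $u$ is treated as constant. *)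

(* Defs.v *)
From HB Require Import structures.
From mathcomp Require Import all_boot all_order all_algebra all_fingroup.
From mathcomp Require Import reals complex.
From mathcomp Require Import mpoly.

Set Implicit Arguments.
Unset Strict Implicit.
Unset Printing Implicit Defensive.

Import GRing.Theory Num.Theory.
Local Open Scope ring_scope.

(* Polynomials in u = (u1,u2,u3): the "constant" coefficient ring. *)
Notation upoly C := {mpoly C[3]}.
(* Polynomials in x = (x1,x2,x3) with coefficients polynomials in u. *)
Notation xupoly C := {mpoly (upoly C)[3]}.

Section Transvectant.
Variable C : comNzRingType.

Definition linform (a : 'rV[C]_3) : {mpoly C[3]} :=
  \sum_(i < 3) a 0 i *: 'X_i.

Definition liftx (f : {mpoly C[3]}) : xupoly C := map_mpoly (fun c => c%:MP) f.

Definition ux : xupoly C := \sum_(i < 3) ('X_i : upoly C) *: 'X_i.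

(* The second transvectant: Omega^2 (f(x) g(y) h(z)) |_{y=z=x}, where
   Omega = det [d/dx ; d/dy ; d/dz] = sum_s sgn(s) d/dx_{s0} d/dy_{s1} d/dz_{s2},
   so Omega^2 = sum_{s,t} sgn(s) sgn(t) d_{x_{s0}} d_{x_{t0}} d_{y_{s1}} d_{y_{t1}}
   d_{z_{s2}} d_{z_{t2}}; u is treated as a constant. *)
Definition J2 (f g h : xupoly C) : xupoly C :=
  \sum_(s : 'S_3) \sum_(t : 'S_3)
    ((-1) ^+ (odd_perm s (+) odd_perm t)%B) *:
      (mderiv (s (inord 0)) (mderiv (t (inord 0)) f) *
       mderiv (s (inord 1)) (mderiv (t (inord 1)) g) *
       mderiv (s (inord 2)) (mderiv (t (inord 2)) h)).

End Transvectant.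

(* Main.v *)
Require Import Defs.
From HB Require Import structures.
From mathcomp Require Import all_boot all_order all_algebra all_fingroup.
From mathcomp Require Import reals complex.
From mathcomp Require Import mpoly.
From mathcomp Require Import ring.
Import GRing.Theory Num.Theory.
Local Open Scope ring_scope.


Definition i0 : 'I_3 := @Ordinal 3 0 isT.
Definition i1 : 'I_3 := @Ordinal 3 1 isT.
Definition i2 : 'I_3 := @Ordinal 3 2 isT.

Definition p1 : 'S_3 := 1%g.
Definition p2 : 'S_3 := tperm i0 i1.
Definition p3 : 'S_3 := tperm i0 i2.
Definition p4 : 'S_3 := tperm i1 i2.
Definition p5 : 'S_3 := (tperm i0 i1 * tperm i1 i2)%g.
Definition p6 : 'S_3 := (tperm i1 i2 * tperm i0 i1)%g.

Lemma ordE (k : 'I_3) : k = i0 \/ k = i1 \/ k = i2.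
Proof.
case: k => [[|[|[|k]]] Hk].
- by left; apply: val_inj.
- by right; left; apply: val_inj.
- by right; right; apply: val_inj.
- by [].
Qed.

Definition sig3 (s : 'S_3) := (s i0, s i1, s i2).

Lemma uniq_ps : uniq [:: p1; p2; p3; p4; p5; p6].
Proof.
apply: (@map_uniq _ _ sig3).
rewrite /sig3 /p1 /p2 /p3 /p4 /p5 /p6 /= !permM !perm1 !permE /=.
by [].
Qed.

Lemma sum_S3 (V : nmodType) (F : 'S_3 -> V) :
  \sum_(s : 'S_3) F s = F p1 + (F p2 + (F p3 + (F p4 + (F p5 + F p6)))).
Proof.
have U := uniq_ps.
have Hall : forall s : 'S_3, s \in [:: p1; p2; p3; p4; p5; p6].
  have Hc : #|[:: p1; p2; p3; p4; p5; p6]| = #|{perm 'I_3}|.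
    by rewrite (card_uniqP U) card_Sn.
  have := subset_cardP Hc.
  move=> /(_ (subset_predT _)) H s; by rewrite H.
rewrite -(eq_bigl _ _ Hall) -big_uniq //.
by rewrite !big_cons big_nil /= addr0.
Qed.

Lemma odd_p1 : odd_perm p1 = false.
Proof. by rewrite /p1 ?odd_permM ?odd_tperm ?odd_perm1. Qed.
Lemma odd_p2 : odd_perm p2 = true.
Proof. by rewrite /p2 ?odd_permM ?odd_tperm ?odd_perm1. Qed.
Lemma odd_p3 : odd_perm p3 = true.
Proof. by rewrite /p3 ?odd_permM ?odd_tperm ?odd_perm1. Qed.
Lemma odd_p4 : odd_perm p4 = true.
Proof. by rewrite /p4 ?odd_permM ?odd_tperm ?odd_perm1. Qed.
Lemma odd_p5 : odd_perm p5 = false.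
Proof. by rewrite /p5 ?odd_permM ?odd_tperm ?odd_perm1. Qed.
Lemma odd_p6 : odd_perm p6 = false.
Proof. by rewrite /p6 ?odd_permM ?odd_tperm ?odd_perm1. Qed.

Section Alg.
Variable S : comNzRingType.
Implicit Types (P Q R : 'I_3 -> 'I_3 -> S) (a b c v w : 'I_3 -> S).

Definition Jm P Q R : S :=
  \sum_(s : 'S_3) \sum_(t : 'S_3) (-1) ^+ (odd_perm s (+) odd_perm t)%B *
     (P (s i0) (t i0) * Q (s i1) (t i1) * R (s i2) (t i2)).

Definition JmE P Q R : S :=
  P i0 i0 * Q i1 i1 * R i2 i2
  - P i0 i1 * Q i1 i0 * R i2 i2
  - P i0 i2 * Q i1 i1 * R i2 i0
  - P i0 i0 * Q i1 i2 * R i2 i1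
  + P i0 i2 * Q i1 i0 * R i2 i1
  + P i0 i1 * Q i1 i2 * R i2 i0
  - P i1 i0 * Q i0 i1 * R i2 i2
  + P i1 i1 * Q i0 i0 * R i2 i2
  + P i1 i2 * Q i0 i1 * R i2 i0
  + P i1 i0 * Q i0 i2 * R i2 i1
  - P i1 i2 * Q i0 i0 * R i2 i1
  - P i1 i1 * Q i0 i2 * R i2 i0
  - P i2 i0 * Q i1 i1 * R i0 i2
  + P i2 i1 * Q i1 i0 * R i0 i2
  + P i2 i2 * Q i1 i1 * R i0 i0
  + P i2 i0 * Q i1 i2 * R i0 i1
  - P i2 i2 * Q i1 i0 * R i0 i1
  - P i2 i1 * Q i1 i2 * R i0 i0
  - P i0 i0 * Q i2 i1 * R i1 i2
  + P i0 i1 * Q i2 i0 * R i1 i2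
  + P i0 i2 * Q i2 i1 * R i1 i0
  + P i0 i0 * Q i2 i2 * R i1 i1
  - P i0 i2 * Q i2 i0 * R i1 i1
  - P i0 i1 * Q i2 i2 * R i1 i0
  + P i2 i0 * Q i0 i1 * R i1 i2
  - P i2 i1 * Q i0 i0 * R i1 i2
  - P i2 i2 * Q i0 i1 * R i1 i0
  - P i2 i0 * Q i0 i2 * R i1 i1
  + P i2 i2 * Q i0 i0 * R i1 i1
  + P i2 i1 * Q i0 i2 * R i1 i0
  + P i1 i0 * Q i2 i1 * R i0 i2
  - P i1 i1 * Q i2 i0 * R i0 i2
  - P i1 i2 * Q i2 i1 * R i0 i0
  - P i1 i0 * Q i2 i2 * R i0 i1
  + P i1 i2 * Q i2 i0 * R i0 i1
  + P i1 i1 * Q i2 i2 * R i0 i0.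

Lemma Jm_expand P Q R : Jm P Q R = JmE P Q R.
Proof.
rewrite /Jm /JmE sum_S3 /=.
rewrite !sum_S3 /=.
rewrite !odd_p1 !odd_p2 !odd_p3 !odd_p4 !odd_p5 !odd_p6 /=.
rewrite /p1 /p2 /p3 /p4 /p5 /p6 !permM !perm1 !permE /=.
rewrite !expr0 !expr1.
ring.
Qed.
End Alg.
Arguments Jm {S}. Arguments JmE {S}.


Section Core.
Variable S : comNzRingType.
Implicit Types (P Q R h : 'I_3 -> 'I_3 -> S) (a b c v w : 'I_3 -> S).

Definition Gab a b : 'I_3 -> 'I_3 -> S := fun i j => a j * b i + a i * b j.
Definition cross a b : 'I_3 -> S := fun k =>
  match val k with
  | 0 => a i1 * b i2 - a i2 * b i1
  | 1 => a i2 * b i0 - a i0 * b i2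
  | _ => a i0 * b i1 - a i1 * b i0
  end.
Definition dot a b : S := a i0 * b i0 + a i1 * b i1 + a i2 * b i2.
Definition quad h a b : S :=
  a i0 * (h i0 i0 * b i0 + h i0 i1 * b i1 + h i0 i2 * b i2) +
  a i1 * (h i1 i0 * b i0 + h i1 i1 * b i1 + h i1 i2 * b i2) +
  a i2 * (h i2 i0 * b i0 + h i2 i1 * b i1 + h i2 i2 * b i2).
Lemma crossE a b : [/\ cross a b i0 = a i1 * b i2 - a i2 * b i1,
  cross a b i1 = a i2 * b i0 - a i0 * b i2 & cross a b i2 = a i0 * b i1 - a i1 * b i0].
Proof. by []. Qed.
Definition vadd a b : 'I_3 -> S := fun k => a k + b k.
Definition Qf h a b v := Jm h (Gab a b) (Gab v v).

Lemma core h a b c (hs : forall i j, h i j = h j i) i j :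
  4 * dot a (cross b c) ^+ 2 * h i j =
    4 * quad h (cross b c) (cross b c) * a i * a j + 4 * quad h (cross c a) (cross c a) * b i * b j
    - Qf h a b c * (a i * b j + b i * a j)
    + (Qf h a b (vadd c b) - Qf h a b c - Qf h a b b) * (a i * c j + c i * a j)
    + (Qf h a b (vadd c a) - Qf h a b c - Qf h a b a) * (b i * c j + c i * b j)
    - (Qf h a b (vadd a b) - Qf h a b a - Qf h a b b) * (c i * c j).
Proof.
have [c0 c1 c2] := crossE b c; have [d0 d1 d2] := crossE c a.
rewrite /Qf !Jm_expand /JmE /Gab /quad /dot /vadd /= c0 c1 c2 d0 d1 d2.

case: (ordE i) => [->|[->|->]]; case: (ordE j) => [->|[->|->]]. all: rewrite ?(hs i1 i0) ?(hs i2 i0) ?(hs i2 i1); ring.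
Qed.
End Core.
Arguments cross {S}. Arguments dot {S}. Arguments quad {S}. Arguments vadd {S}. Arguments Gab {S}. Arguments Qf {S}. Arguments core {S}. Arguments crossE {S}.


Section Gen.
Variable C : comNzRingType.
Implicit Types (w z : 'I_3 -> C).

Definition lin w : {mpoly C[3]} := \sum_(i < 3) w i *: 'X_i.

Lemma mderivXU (i j : 'I_3) :
  mderiv j ('X_i : {mpoly C[3]}) = ((i == j)%:R)%:MP.
Proof.
rewrite mderivX mnm1E.
case: eqP => [->|_]; last by rewrite scale0r rmorph0.
have -> : (U_(j) - U_(j))%MM = 0%MM by apply/mnmP => k; rewrite mnmBE subnn mnmE.
by rewrite mpolyX0 scale1r rmorph1.
Qed.

Lemma dlin w j : mderiv j (lin w) = (w j)%:MP.
Proof.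
rewrite /lin raddf_sum /=.
rewrite (eq_bigr (fun i : 'I_3 => (w i * (i == j)%:R)%:MP)); last first.
  by move=> i _; rewrite mderivZ mderivXU -mul_mpolyC rmorphM.
rewrite -rmorph_sum; congr (_%:MP).
rewrite (bigD1 j) //= eqxx mulr1 big1 ?addr0 // => i /negPf ->.
by rewrite mulr0.
Qed.

Lemma ddprod w z i j :
  mderiv i (mderiv j (lin w * lin z)) =
  (w j)%:MP * (z i)%:MP + (w i)%:MP * (z j)%:MP.
Proof.
by rewrite !mderivM !dlin !mderivD !mderivM !dlin !mderivC mul0r mulr0 add0r addr0.
Qed.

Lemma dsq w j : mderiv j (lin w ^+ 2) = (w j)%:MP * lin w *+ 2.
Proof. rewrite expr2 mderivM dlin; ring. Qed.

Lemma dcube w j : mderiv j (lin w ^+ 3) = (w j)%:MP * lin w ^+ 2 *+ 3.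
Proof.
rewrite exprS mderivM dsq dlin.
ring.
Qed.

Lemma ddcube w i j : mderiv i (mderiv j (lin w ^+ 3)) =
  (w j)%:MP * (w i)%:MP * lin w *+ 6.
Proof.
rewrite dcube mderivMn mderivM mderivC mul0r add0r dsq.
ring.
Qed.

End Gen.
Arguments lin {C}.


Lemma mderiv_map (A B : comNzRingType) (f : {rmorphism A -> B}) i (p : {mpoly A[3]}) :
  mderiv i (map_mpoly f p) = map_mpoly f (mderiv i p).
Proof.
apply/mpolyP => m.
by rewrite mcoeff_map_mpoly !mcoeff_mderiv mcoeff_map_mpoly raddfMn.
Qed.

Lemma Jm_rmorph (A B : comNzRingType) (f : {rmorphism A -> B}) P Q R :
  f (Jm P Q R) = Jm (fun i j => f (P i j)) (fun i j => f (Q i j)) (fun i j => f (R i j)).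
Proof.
rewrite /Jm rmorph_sum; apply: eq_bigr => s _; rewrite rmorph_sum.
apply: eq_bigr => t _.
by rewrite !rmorphM rmorphXn rmorphN1.
Qed.

Lemma eq_Jm (A : comNzRingType) (P Q R P' Q' R' : 'I_3 -> 'I_3 -> A) :
  (forall i j, P i j = P' i j) -> (forall i j, Q i j = Q' i j) ->
  (forall i j, R i j = R' i j) -> Jm P Q R = Jm P' Q' R'.
Proof.
move=> eP eQ eR; rewrite /Jm; apply: eq_bigr => s _; apply: eq_bigr => t _.
by rewrite eP eQ eR.
Qed.

Definition dd (A : comNzRingType) (p : {mpoly A[3]}) (i j : 'I_3) := mderiv i (mderiv j p).
Arguments dd {A}.

Lemma inordE : [/\ (inord 0 : 'I_3) = i0, (inord 1 : 'I_3) = i1 & (inord 2 : 'I_3) = i2].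
Proof. by split; apply: val_inj; rewrite /= inordK. Qed.

Lemma J2E (A : comNzRingType) (f g h : xupoly A) : J2 f g h = Jm (dd f) (dd g) (dd h).
Proof.
have [E0 E1 E2] := inordE.
rewrite /J2 /Jm E0 E1 E2; apply: eq_bigr => s _; apply: eq_bigr => t _.
by rewrite -mul_mpolyC rmorphXn rmorphN1.
Qed.

Section Phi.
Variable A : comNzRingType.

Lemma liftxE (f : {mpoly A[3]}) : liftx f = map_mpoly (mpolyC 3 (R:=A)) f.
Proof. by []. Qed.

Lemma phi_liftx (v : 'I_3 -> A) f : map_mpoly (meval v) (liftx f) = f.
Proof.
apply/mpolyP => m.
rewrite liftxE !mcoeff_map_mpoly; exact: mevalC.
Qed.

Lemma phi_ux (v : 'I_3 -> A) : map_mpoly (meval v) (ux A) = lin v.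
Proof.
rewrite /ux /lin raddf_sum; apply: eq_bigr => i _ /=.
rewrite map_mpolyZ map_mpolyX; congr (_ *: _); exact: mevalXU.
Qed.

Lemma liftx_lin (w : 'I_3 -> A) : liftx (lin w) = lin (fun i => (w i)%:MP).
Proof.
rewrite liftxE /lin raddf_sum; apply: eq_bigr => i _ /=.
by rewrite map_mpolyZ map_mpolyX.
Qed.

Lemma hyp_phi (f g : {mpoly A[3]}) (v : 'I_3 -> A) :
  J2 (liftx f) (liftx g) (ux A ^+ 2) = 0 ->
  Jm (dd f) (dd g) (dd (lin v ^+ 2)) = 0.
Proof.
move=> /(congr1 (map_mpoly (meval v))); rewrite rmorph0 J2E Jm_rmorph => <-.
apply: eq_Jm => i j /=; rewrite /dd -!(@mderiv_map _ _ (meval v)) /=;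
  congr (mderiv _ (mderiv _ _)); symmetry.
- exact: phi_liftx.
- exact: phi_liftx.
- rewrite rmorphXn; congr (_ ^+ 2); exact: phi_ux.
Qed.
End Phi.


Lemma deriv_homog (A : comNzRingType) (d : nat) (p : {mpoly A[3]}) i :
  p \is d.-homog -> mderiv i p \is d.-1.-homog.
Proof.
move=> hp; apply/dhomogP => m; rewrite mcoeff_msupp mcoeff_mderiv => nz.
have nz' : p@_(m + U_(i)) != 0.
  by apply: contraNneq nz => ->; rewrite mul0rn.
have := dhomog_mf hp; move=> /(_ (m + U_(i))%MM); rewrite mcoeff_msupp => /(_ nz').
move=> H; have E := mdegD m U_(i); rewrite mdeg1 in E.
have E2 : (mdeg m + 1 = d)%N by rewrite -E; exact: H.
by rewrite -E2 addn1.
Qed.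

Lemma const0 (A : comNzRingType) (p : {mpoly A[3]}) :
  p \is 0.-homog -> p = (p@_0)%:MP.
Proof.
move=> hp; apply/mpolyP => m; rewrite mcoeffC.
case: eqP => [->|ne]; first by rewrite ?mulr1.
rewrite mulr0; apply: (dhomog_nemf_coeff hp).
by rewrite /= mdeg_eq0; apply/eqP.
Qed.

Lemma grad0 (A : numDomainType) (d : nat) (p : {mpoly A[3]}) :
  p \is d.+1.-homog -> (forall i, mderiv i p = 0) -> p = 0.
Proof.
move=> hp hg; apply/mpolyP => m; rewrite mcoeff0.
case: (eqVneq (mdeg m) d.+1) => [Hm|ne]; last exact: (dhomog_nemf_coeff hp).
have [i Hi] : exists i, (0 < m i)%N.
  apply/existsP; apply: contraT; rewrite negb_exists => /forallP H0.
  move: Hm; rewrite mdegE big1 // => k _.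
  by move: (H0 k); rewrite lt0n negbK => /eqP.
pose m' := (m - U_(i))%MM.
have Em : (m' + U_(i))%MM = m.
  apply/mnmP => k; rewrite mnmDE mnmBE mnm1E.
  by case: (eqVneq i k) => [<-|_]; rewrite ?subn0 ?addn0 // subnK.
have := congr1 (mcoeff m') (hg i); rewrite mcoeff_mderiv mcoeff0 Em => /eqP.
by rewrite mulrn_eq0 /= => /eqP.
Qed.

Lemma lin_homog (A : comNzRingType) (w : 'I_3 -> A) : lin w \is 1.-homog.
Proof.
rewrite /lin; apply: rpred_sum => i _; apply: dhomogZ.
by rewrite dhomogX /= mdeg1.
Qed.

Lemma linX_homog (A : comNzRingType) (w : 'I_3 -> A) k : lin w ^+ k \is k.-homog.
Proof. by have := dhomogMn k (lin_homog _ w); rewrite mul1n. Qed.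


Lemma ne01 : (i0 == i1) = false. Proof. by []. Qed.
Lemma ne02 : (i0 == i2) = false. Proof. by []. Qed.
Lemma ne10 : (i1 == i0) = false. Proof. by []. Qed.
Lemma ne12 : (i1 == i2) = false. Proof. by []. Qed.
Lemma ne20 : (i2 == i0) = false. Proof. by []. Qed.
Lemma ne21 : (i2 == i1) = false. Proof. by []. Qed.

Section Quad.
Variable C : numFieldType.
Implicit Types (a b c v w : 'I_3 -> C).

Definition indep a b := forall x y : C,
  (forall i, x * a i + y * b i = 0) -> x = 0 /\ y = 0.

Lemma cross_nz a b : indep a b -> exists l, cross a b l != 0.
Proof.
move=> hi; apply/existsP; apply: contraT; rewrite negb_exists => /forallP H.
have Z l : cross a b l = 0 by apply/eqP; move: (H l); rewrite negbK.
have [e0 e1 e2] := crossE a b.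
have c0 := Z i0; have c1 := Z i1; have c2 := Z i2.
rewrite e0 in c0; rewrite e1 in c1; rewrite e2 in c2.
case: (boolP [exists k, a k != 0]) => [/existsP [k Hk] | /existsPn Ha].
- have Hall : forall i, b k * a i + - a k * b i = 0.
    move=> i; case: (ordE i) => [->|[->|->]]; case: (ordE k) => [->|[->|->]];
    first [ ring | rewrite -c0; ring | rewrite -oppr0 -c0; ring
          | rewrite -c1; ring | rewrite -oppr0 -c1; ring
          | rewrite -c2; ring | rewrite -oppr0 -c2; ring ].
  have [_ Hy] := hi _ _ Hall.
  by move: Hk; rewrite -oppr_eq0 Hy eqxx.
- have Hall : forall i, 1 * a i + 0 * b i = 0.
    by move=> i; move: (Ha i); rewrite negbK => /eqP ->; rewrite mulr0 mul0r addr0.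
  have [H1 _] := hi _ _ Hall.
  by move/eqP: H1; rewrite oner_eq0.
Qed.

Lemma exists_c a b : indep a b -> exists c, dot a (cross b c) != 0.
Proof.
move=> /cross_nz [l Hl].
exists (fun i => if i == l then 1 else 0).
have [e0 e1 e2] := crossE b (fun i => if i == l then 1 else 0).
have [d0 d1 d2] := crossE a b.
move: Hl; rewrite /dot e0 e1 e2.
case: (ordE l) => [->|[->|->]]; rewrite ?d0 ?d1 ?d2 !eqxx ?ne01 ?ne02 ?ne10 ?ne12 ?ne20 ?ne21;
  apply: contra => /eqP E; apply/eqP; rewrite -E; ring.
Qed.


Lemma quad_main a b (hi : indep a b) (f : {mpoly C[3]}) :
  f \is 2.-homog ->
  (forall v, Jm (dd f) (dd (lin a * lin b)) (dd (lin v ^+ 2)) = 0) ->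
  exists a0 b0 : C, f = a0 *: lin a ^+ 2 + b0 *: lin b ^+ 2.
Proof.
move=> hf hJ.
pose h i j := (dd f i j)@_0.
have Hc : forall i j, dd f i j = (h i j)%:MP.
  move=> i j; apply: const0; rewrite /dd.
  exact: (@deriv_homog _ _ _ i (@deriv_homog _ _ _ j hf)).
have hs : forall i j, h i j = h j i by move=> i j; rewrite /h /dd mderiv_comm.
have hQ : forall v, Qf h a b v = 0.
  move=> v; apply/eqP; rewrite -(mpolyC_eq0 3); apply/eqP.
  have -> : (Qf h a b v)%:MP = Jm (dd f) (dd (lin a * lin b)) (dd (lin v ^+ 2)).
    rewrite /Qf (@Jm_rmorph _ _ (mpolyC 3 (R:=C))).
    apply: eq_Jm => i j /=.
    - by rewrite Hc.
    - by rewrite /dd ddprod /Gab rmorphD !rmorphM.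
    - by rewrite /dd expr2 ddprod /Gab rmorphD !rmorphM.
  exact: hJ.
have [c Dnz] := exists_c _ _ hi.
set D := dot a (cross b c) in Dnz.
set al := quad h (cross b c) (cross b c).
set be := quad h (cross c a) (cross c a).
have Hh : forall i j, h i j = al / D ^+ 2 * a i * a j + be / D ^+ 2 * b i * b j.
  move=> i j; have := core h a b c hs i j; rewrite !hQ -/D -/al -/be => E.
  have nz : 4 * D ^+ 2 != 0 by rewrite mulf_neq0 ?expf_neq0 ?pnatr_eq0.
  apply: (mulfI nz); rewrite E; field; exact: Dnz.
have [ka Eka] : exists ka, ka = al / D ^+ 2 / 2 by eexists.
have [kb Ekb] : exists kb, kb = be / D ^+ 2 / 2 by eexists.
exists ka, kb.
apply/eqP; rewrite -subr_eq0; apply/eqP.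
set r := f - _.
have hr : r \is 2.-homog.
  by rewrite rpredB // rpredD // dhomogZ // linX_homog.
apply: (@grad0 _ _ _ hr) => j.
apply: (@grad0 _ _ _ (@deriv_homog _ _ _ j hr)) => i.
rewrite /r !mderivB !mderivD !mderivZ -/(dd f i j) Hc !expr2 !ddprod.
transitivity ((h i j - (ka * (a j * a i + a i * a j)
   + kb * (b j * b i + b i * b j)))%:MP_[3]).
  rewrite rmorphB !rmorphD !rmorphM !rmorphD !rmorphM -!mul_mpolyC; ring.
apply/eqP; rewrite mpolyC_eq0 Hh Eka Ekb; apply/eqP; field; exact: Dnz.
Qed.

End Quad.
Arguments indep {C}. Arguments quad_main {C a b}. Arguments exists_c {C}. Arguments cross_nz {C}.


Lemma Jm_deriv (A : comNzRingType) k (P Q R : 'I_3 -> 'I_3 -> {mpoly A[3]}) :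
  (forall i j, mderiv k (Q i j) = 0) -> (forall i j, mderiv k (R i j) = 0) ->
  mderiv k (Jm P Q R) = Jm (fun i j => mderiv k (P i j)) Q R.
Proof.
move=> hQ hR; rewrite /Jm raddf_sum; apply: eq_bigr => s _ /=.
rewrite raddf_sum; apply: eq_bigr => t _ /=.
rewrite !mulr_sign; case: (_ (+) _); rewrite ?mderivN !mderivM !hQ !hR; ring.
Qed.

Lemma ddD (A : comNzRingType) (p : {mpoly A[3]}) k i j :
  dd (mderiv k p) i j = mderiv k (dd p i j).
Proof. by rewrite /dd (mderiv_comm k j) (mderiv_comm k i). Qed.

Lemma mcoeff_lin (A : comNzRingType) (w : 'I_3 -> A) l : (lin w)@_U_(l) = w l.
Proof.
rewrite /lin raddf_sum /= (bigD1 l) //= mcoeffZ mcoeffXU eqxx mulr1.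
rewrite big1 ?addr0 // => i /negPf ne; by rewrite mcoeffZ mcoeffXU ne mulr0.
Qed.

Section Cubic.
Variable C : numFieldType.
Implicit Types (a b c v w : 'I_3 -> C).

Lemma nz_vec a b : indep a b -> (exists l, a l != 0) /\ (exists l, b l != 0).
Proof.
move=> hi; split; apply/existsP; apply: contraT; rewrite negb_exists => /forallP H.
- have Hall : forall i, 1 * a i + 0 * b i = 0.
    by move=> i; move: (H i); rewrite negbK => /eqP ->; rewrite mulr0 mul0r addr0.
  have [H1 _] := hi _ _ Hall.
  by move/eqP: H1; rewrite oner_eq0.
- have Hall : forall i, 0 * a i + 1 * b i = 0.
    by move=> i; move: (H i); rewrite negbK => /eqP ->; rewrite mulr0 mul0r addr0.
  have [_ H1] := hi _ _ Hall.
  by move/eqP: H1; rewrite oner_eq0.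
Qed.

Lemma cubic_main a b (hi : indep a b) (f : {mpoly C[3]}) :
  f \is 3.-homog ->
  (forall v, Jm (dd f) (dd (lin a * lin b)) (dd (lin v ^+ 2)) = 0) ->
  exists a0 b0 : C, f = a0 *: lin a ^+ 3 + b0 *: lin b ^+ 3.
Proof.
move=> hf hJ.
have Hk : forall k, exists ab : C * C,
    mderiv k f = ab.1 *: lin a ^+ 2 + ab.2 *: lin b ^+ 2.
  move=> k.
  have hJk : forall v, Jm (dd (mderiv k f)) (dd (lin a * lin b)) (dd (lin v ^+ 2)) = 0.
    move=> v; have := congr1 (mderiv k) (hJ v); rewrite mderiv0 Jm_deriv.
    - move=> <-; apply: eq_Jm => i j //=; exact: ddD.
    - by move=> i j; rewrite /dd ddprod mderivD !mderivM !mderivC !mul0r !mulr0 !addr0.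
    - by move=> i j; rewrite /dd expr2 ddprod mderivD !mderivM !mderivC !mul0r !mulr0 !addr0.
  have [x [y E]] := quad_main hi _ (@deriv_homog _ _ _ k hf) hJk.
  by exists (x, y).
have [F HF] := fin_all_exists Hk.
pose al k := (F k).1; pose be k := (F k).2.
have HF' k : mderiv k f = al k *: lin a ^+ 2 + be k *: lin b ^+ 2 by exact: HF.
have sym j k : al j * a k = al k * a j /\ be j * b k = be k * b j.
  have E := mderiv_comm j k f.
  rewrite (HF' j) (HF' k) !mderivD !mderivZ !dsq in E.
  have El l := congr1 (mcoeff U_(l)) E.
  have H2 : (2 : C) != 0 by rewrite pnatr_eq0.
  have Hall : forall l, (2 * (al j * a k - al k * a j)) * a l +
      (2 * (be j * b k - be k * b j)) * b l = 0.
    move=> l; move: (El l).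
    rewrite !mcoeffD !mcoeffZ !mcoeffMn !mcoeffCM !mcoeff_lin => El'.
    transitivity ((al j * (a k * a l *+ 2) + be j * (b k * b l *+ 2)) -
                (al k * (a j * a l *+ 2) + be k * (b j * b l *+ 2))); first ring.
    by rewrite El' subrr.
  have [hx hy] := hi _ _ Hall.
  split; apply/eqP; rewrite -subr_eq0.
  - by move: hx => /eqP; rewrite mulf_eq0 (negPf H2).
  - by move: hy => /eqP; rewrite mulf_eq0 (negPf H2).
have [[l1 Hl1] [l2 Hl2]] := nz_vec _ _ hi.
have Eal k : al k = al l1 / a l1 * a k.
  have [s1 _] := sym l1 k.
  by rewrite -(mulfK Hl1 (al k)) -s1 mulrAC.
have Ebe k : be k = be l2 / b l2 * b k.
  have [_ s2] := sym l2 k.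
  by rewrite -(mulfK Hl2 (be k)) -s2 mulrAC.
have [ka Eka] : exists ka : C, ka *+ 3 = al l1 / a l1.
  by exists (al l1 / a l1 / 3); rewrite -mulr_natr; field.
have [kb Ekb] : exists kb : C, kb *+ 3 = be l2 / b l2.
  by exists (be l2 / b l2 / 3); rewrite -mulr_natr; field.
exists ka, kb.
apply/eqP; rewrite -subr_eq0; apply/eqP.
set r := f - _.
have hr : r \is 3.-homog.
  by rewrite rpredB // rpredD // dhomogZ // linX_homog.
apply: (@grad0 _ _ _ hr) => k.
rewrite /r !mderivB !mderivD !mderivZ !dcube HF' Eal Ebe -Eka -Ekb.
rewrite -!mul_mpolyC !rmorphM !rmorphMn; ring.
Qed.
End Cubic.


Lemma vanish2 (S : comNzRingType) (k1 k2 : S) (A B : 'I_3 -> S) (R : 'I_3 -> 'I_3 -> S) :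
  Jm (fun i j => k1 * (A j * A i + A i * A j) + k2 * (B j * B i + B i * B j))
     (fun i j => A j * B i + A i * B j) R = 0.
Proof. rewrite Jm_expand /JmE; ring. Qed.

Lemma vanish3 (S : comNzRingType) (k1 k2 LA LB : S) (A B : 'I_3 -> S) (R : 'I_3 -> 'I_3 -> S) :
  Jm (fun i j => k1 * (A j * A i * LA *+ 6) + k2 * (B j * B i * LB *+ 6))
     (fun i j => A j * B i + A i * B j) R = 0.
Proof. rewrite Jm_expand /JmE; ring. Qed.

Lemma free_indep (K : numFieldType) (a b : 'rV[K]_3) :
  free [:: a; b] -> indep (fun i => a 0 i) (fun i => b 0 i).
Proof.
move=> hf; have /freeP Hk : free (in_tuple [:: a; b]) by [].
move=> x y H.
pose k := fun i : 'I_2 => if val i == 0%N then x else y.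
have Hs : \sum_(i < 2) k i *: (in_tuple [:: a; b])`_i = 0.
  rewrite !big_ord_recl big_ord0 /= addr0.
  by apply/rowP => j; rewrite !mxE H.
split; [exact: (Hk k Hs ord0) | exact: (Hk k Hs ord_max)].
Qed.

Lemma dd2gen (S : comNzRingType) (c d : S) (w z : 'I_3 -> S) i j :
  dd (c%:MP_[3] * lin w ^+ 2 + d%:MP_[3] * lin z ^+ 2) i j =
  c%:MP_[3] * ((w j)%:MP_[3] * (w i)%:MP_[3] + (w i)%:MP_[3] * (w j)%:MP_[3]) +
  d%:MP_[3] * ((z j)%:MP_[3] * (z i)%:MP_[3] + (z i)%:MP_[3] * (z j)%:MP_[3]).
Proof. by rewrite /dd !mderivD !mderiv_mulC !expr2 !ddprod. Qed.

Lemma dd3gen (S : comNzRingType) (c d : S) (w z : 'I_3 -> S) i j :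
  dd (c%:MP_[3] * lin w ^+ 3 + d%:MP_[3] * lin z ^+ 3) i j =
  c%:MP_[3] * ((w j)%:MP_[3] * (w i)%:MP_[3] * lin w *+ 6) +
  d%:MP_[3] * ((z j)%:MP_[3] * (z i)%:MP_[3] * lin z *+ 6).
Proof. by rewrite /dd !mderivD !mderiv_mulC !ddcube. Qed.

Section Lift.
Variable A : comNzRingType.
Implicit Types p q : {mpoly A[3]}.
Lemma liftxM p q : liftx (p * q) = liftx p * liftx q.
Proof. by rewrite !liftxE rmorphM. Qed.
Lemma liftxD p q : liftx (p + q) = liftx p + liftx q.
Proof. by rewrite !liftxE rmorphD. Qed.
Lemma liftxZ (c : A) p : liftx (c *: p) = c%:MP_[3] *: liftx p.
Proof. by rewrite !liftxE map_mpolyZ. Qed.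
Lemma liftxZ' (c : A) p : liftx (c *: p) = (c%:MP_[3])%:MP_[3] * liftx p.
Proof. by rewrite liftxZ mul_mpolyC. Qed.
Lemma liftxX p n : liftx (p ^+ n) = liftx p ^+ n.
Proof. by rewrite !liftxE rmorphXn. Qed.

Lemma dd_lift2 (c d : A) (w z : 'I_3 -> A) i j :
  dd (liftx (c *: lin w ^+ 2 + d *: lin z ^+ 2)) i j =
  (c%:MP_[3])%:MP_[3] * (((w j)%:MP_[3])%:MP_[3] * ((w i)%:MP_[3])%:MP_[3]
                     + ((w i)%:MP_[3])%:MP_[3] * ((w j)%:MP_[3])%:MP_[3]) +
  (d%:MP_[3])%:MP_[3] * (((z j)%:MP_[3])%:MP_[3] * ((z i)%:MP_[3])%:MP_[3]
                     + ((z i)%:MP_[3])%:MP_[3] * ((z j)%:MP_[3])%:MP_[3]).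
Proof. rewrite liftxD !liftxZ' !liftxX !liftx_lin; exact: dd2gen. Qed.

Lemma dd_lift3 (c d : A) (w z : 'I_3 -> A) i j :
  dd (liftx (c *: lin w ^+ 3 + d *: lin z ^+ 3)) i j =
  (c%:MP_[3])%:MP_[3] * (((w j)%:MP_[3])%:MP_[3] * ((w i)%:MP_[3])%:MP_[3] * lin (fun k => (w k)%:MP_[3]) *+ 6) +
  (d%:MP_[3])%:MP_[3] * (((z j)%:MP_[3])%:MP_[3] * ((z i)%:MP_[3])%:MP_[3] * lin (fun k => (z k)%:MP_[3]) *+ 6).
Proof. rewrite liftxD !liftxZ' !liftxX !liftx_lin; exact: dd3gen. Qed.
End Lift.

Theorem lemma5p3 (R : realType) (a b : 'rV[R[i]]_3) :
  free [:: a; b] ->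
  (* (B) quadratic forms *)
  (forall f : {mpoly R[i][3]}, f \is 2.-homog ->
     (J2 (liftx f) (liftx (linform a * linform b)) (ux R[i] ^+ 2) = 0 <->
      exists a0 b0 : R[i],
        f = a0 *: linform a ^+ 2 + b0 *: linform b ^+ 2)) /\
  (* (C) cubic forms *)
  (forall f : {mpoly R[i][3]}, f \is 3.-homog ->
     (J2 (liftx f) (liftx (linform a * linform b)) (ux R[i] ^+ 2) = 0 <->
      exists a0 b0 : R[i],
        f = a0 *: linform a ^+ 3 + b0 *: linform b ^+ 3)).
Proof.
move=> hfree.
have hi := free_indep _ _ _ hfree.
have La : linform a = lin (fun i => a 0 i) by [].
have Lb : linform b = lin (fun i => b 0 i) by [].
pose A i : xupoly R[i] := ((a 0 i)%:MP_[3])%:MP_[3].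
pose B i : xupoly R[i] := ((b 0 i)%:MP_[3])%:MP_[3].
have HQ : forall i j, dd (liftx (linform a * linform b)) i j = A j * B i + A i * B j.
  move=> i j; rewrite /dd La Lb liftxM !liftx_lin ddprod.
  by [].
split => f hf; split.
- move=> hJ; have hJ' := fun v => hyp_phi _ _ _ v hJ.
  exact: (quad_main hi f hf hJ').
- move=> [a0 [b0 ->]]; rewrite J2E.
  rewrite (@eq_Jm _ _ _ _
    (fun i j => (a0%:MP_[3])%:MP_[3] * (A j * A i + A i * A j) +
                (b0%:MP_[3])%:MP_[3] * (B j * B i + B i * B j))
    (fun i j => A j * B i + A i * B j) (dd (ux R[i] ^+ 2))).
  + exact: vanish2.
  + move=> i j; exact: dd_lift2.
  + exact: HQ.
  + by [].
- move=> hJ; have hJ' := fun v => hyp_phi _ _ _ v hJ.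
  exact: (cubic_main _ _ _ hi f hf hJ').
- move=> [a0 [b0 ->]]; rewrite J2E.
  rewrite (@eq_Jm _ _ _ _
    (fun i j => (a0%:MP_[3])%:MP_[3] * (A j * A i * lin (fun k => (a 0 k)%:MP_[3]) *+ 6) +
                (b0%:MP_[3])%:MP_[3] * (B j * B i * lin (fun k => (b 0 k)%:MP_[3]) *+ 6))
    (fun i j => A j * B i + A i * B j) (dd (ux R[i] ^+ 2))).
  + exact: vanish3.
  + move=> i j; exact: dd_lift3.
  + exact: HQ.
  + by [].
Qed.
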